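(* Let $\mathbb{F}$ be a field, $n\ge 1$, and $A,B\in M(n,\mathbb{F})$. Then $A\sim_{M(n,\mathbb{F})} B$ if and only if $A_s$ and $B_s$ are conjugate by an invertible matrix, i.e. there exists $g\in \mathrm{GL}(n,\mathbb{F})$ with $B_s=gA_sg^{-1}$.
   Context: $M(n,\mathbb{F})$ denotes the semigroup of all $n\times n$ matrices over $\mathbb{F}$ under ordinary matrix multiplication, identified with linear operators on $\mathbb{F}^n$; its group of units is $\mathrm{GL}(n,\mathbb{F})$. Two elements $a,b$ of a semigroup $S$ are primarily $S$-conjugated if there are $x,y\in S$ with $a=xy$ and $b=yx$; the relation $\sim_S$ ($S$-conjugacy) is the transitive closure of primary $S$-conjugacy. For $A\in M(n,\mathbb{F})$ let $t\ge 0$ be such that $A^t(\mathbb{F}^n)=A^{t+i}(\mathbb{F}^n)$ for all $i\ge 0$ (such $t$ exists, e.g. $t=n$); then $\mathbb{F}^n=A^t(\mathbb{F}^n)\oplus\ker(A^t)$, and $A_s$ denotes the linear operator with $A_s(v)=A(v)$ for $v\in A^t(\mathbb{F}^n)$ and $A_s(v)=0$ for $v\in\ker(A^t)$ (this does not depend on the choice of such $t$). *)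

(* Defs.v *)
From HB Require Import structures.
From mathcomp Require Import all_boot all_order all_algebra.
From Stdlib Require Import Relations.
Set Implicit Arguments. Unset Strict Implicit. Unset Printing Implicit Defensive.
Import GRing.Theory.
Local Open Scope ring_scope.

(* Matrices act on row vectors: the operator of A is v |-> v *m A. *)

Definition prim_conj (F : fieldType) (n : nat) (a b : 'M[F]_n) : Prop :=
  exists x y : 'M[F]_n, a = x *m y /\ b = y *m x.

Definition mx_conj (F : fieldType) (n : nat) : relation 'M[F]_n :=
  clos_trans _ (@prim_conj F n).

(* A_s : acts as A on Im(A^n) and as 0 on ker(A^n) (t = n works).
   proj_mx U V is the projection onto U along V. *)
Definition Ss (F : fieldType) (n : nat) (A : 'M[F]_n) : 'M[F]_n :=
  proj_mx (A ^+ n) (kermx (A ^+ n)) *m A.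

(* Main.v *)
Require Import Defs.
From HB Require Import structures.
From mathcomp Require Import all_boot all_order all_algebra.
From Stdlib Require Import Relations.
Set Implicit Arguments. Unset Strict Implicit. Unset Printing Implicit Defensive.
Import GRing.Theory.
Local Open Scope ring_scope.

Lemma exprSmx (F : fieldType) n (A : 'M[F]_n) k : A ^+ k.+1 = A *m A ^+ k.
Proof. by rewrite exprS mulmxE. Qed.

Lemma exprSrmx (F : fieldType) n (A : 'M[F]_n) k : A ^+ k.+1 = A ^+ k *m A.
Proof. by rewrite exprSr mulmxE. Qed.

Lemma stab (F : fieldType) n (A : 'M[F]_n) k :
  \rank (A ^+ k.+1) = \rank (A ^+ k) -> forall d, (A ^+ (k + d) == A ^+ k)%MS.
Proof.
move=> hr.
have e1 : (A ^+ k.+1 == A ^+ k)%MS.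
  have s : (A ^+ k.+1 <= A ^+ k)%MS by rewrite exprSmx submxMl.
  by rewrite -(mxrank_leqif_eq s) hr.
elim=> [|d IH]; first by rewrite addn0 submx_refl.
rewrite addnS exprSrmx.
have h : (A ^+ (k + d) *m A :=: A ^+ k *m A)%MS.
  by apply: eqmxMr; apply/eqmxP.
apply/eqmxP; apply: eqmx_trans h _; rewrite -exprSrmx; exact/eqmxP.
Qed.

Lemma exists_stab (F : fieldType) n (A : 'M[F]_n) :
  exists k, (k <= n)%N /\ \rank (A ^+ k.+1) = \rank (A ^+ k).
Proof.
have H : forall k, ((\rank (A ^+ k) + k <= n)%N \/
   exists j, (j < k)%N /\ \rank (A ^+ j.+1) = \rank (A ^+ j)).
  elim=> [|k [IH|[j [hj1 hj2]]]].
  - by left; rewrite expr0 addn0 mxrank1.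
  - have := mxrankM_maxr A (A ^+ k); rewrite -exprSmx leq_eqVlt => /orP [/eqP e|lt].
      by right; exists k.
    by left; rewrite addnS; apply: leq_trans IH; rewrite ltn_add2r.
  - by right; exists j; split=> //; apply: ltnW.
case: (H n.+1) => [h|[j [hj1 hj2]]].
  by exfalso; move: h; rewrite addnS ltnNge leq_addl.
by exists j.
Qed.

Lemma fit_rank (F : fieldType) n (A : 'M[F]_n) :
  \rank (A ^+ n *m A ^+ n) = \rank (A ^+ n).
Proof.
have [k [hk e]] := exists_stab A.
have := stab e (n + n - k); have := stab e (n - k).
rewrite subnKC // addnC (subnK (leq_trans hk (leq_addr _ _))) mulmxE -exprD.
by move=> /eqmx_rank -> /eqmx_rank ->.
Qed.

Lemma fit_cap (F : fieldType) n (A : 'M[F]_n) :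
  (A ^+ n :&: kermx (A ^+ n))%MS = 0.
Proof.
apply/eqP; rewrite -mxrank_eq0.
have := mxrank_mul_ker (A ^+ n) (A ^+ n); rewrite fit_rank => /eqP.
by rewrite -{2}(addn0 (\rank (A ^+ n))) eqn_add2l.
Qed.

Lemma fit_full (F : fieldType) n (A : 'M[F]_n) m (W : 'M[F]_(m, n)) :
  (W <= A ^+ n + kermx (A ^+ n))%MS.
Proof.
apply: submx_full; rewrite /row_full.
have := mxrank_sum_cap (A ^+ n) (kermx (A ^+ n)).
rewrite fit_cap mxrank0 addn0 mxrank_ker => ->.
by rewrite subnKC // rank_leq_col.
Qed.

Lemma ker_sub (F : fieldType) n (hn : (0 < n)%N) (A : 'M[F]_n) :
  (kermx A <= kermx (A ^+ n))%MS.
Proof.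
rewrite sub_kermx; case: n hn A => // n _ A.
by rewrite exprSmx mulmxA mulmx_ker mul0mx.
Qed.

Lemma inj_U (F : fieldType) n (hn : (0 < n)%N) (A : 'M[F]_n) m (W : 'M[F]_(m, n)) :
  (W <= A ^+ n)%MS -> W *m A = 0 -> W = 0.
Proof.
move=> sW WA; apply/eqP; rewrite -submx0 -(fit_cap A) sub_capmx sW /=.
apply: submx_trans (ker_sub hn A); by rewrite sub_kermx WA.
Qed.

Lemma powX (F : fieldType) n (X Y : 'M[F]_n) k :
  (X *m Y) ^+ k *m X = X *m (Y *m X) ^+ k.
Proof.
elim: k => [|k IH]; first by rewrite !expr0 mul1mx mulmx1.
by rewrite !exprSrmx -(mulmxA _ (X *m Y) X) -(mulmxA X Y X) mulmxA IH !mulmxA.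
Qed.

Lemma injX (F : fieldType) n (hn : (0 < n)%N) (X Y : 'M[F]_n) m (W : 'M[F]_(m, n)) :
  (W <= (X *m Y) ^+ n)%MS -> W *m X = 0 -> W = 0.
Proof.
move=> sW WX; apply: (inj_U hn sW); by rewrite mulmxA WX mul0mx.
Qed.

Lemma rank_le (F : fieldType) n (hn : (0 < n)%N) (X Y : 'M[F]_n) :
  (\rank ((X *m Y) ^+ n) <= \rank ((Y *m X) ^+ n))%N.
Proof.
have e := mxrank_mul_ker ((X *m Y) ^+ n) X.
have c : ((X *m Y) ^+ n :&: kermx X)%MS = 0.
  apply: (injX hn (Y := Y)); first exact: capmxSl.
  by apply/eqP; rewrite -sub_kermx capmxSr.
move: e; rewrite c mxrank0 addn0 => <-; apply: mxrankS.
by rewrite powX submxMl.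
Qed.
Lemma main_dir (F : fieldType) n (hn : (0 < n)%N) (X Y : 'M[F]_n) :
  exists h, h \in unitmx /\ h *m Ss (Y *m X) = Ss (X *m Y) *m h.
Proof.
rewrite /Ss.
set A := X *m Y; set B := Y *m X.
set UA := A ^+ n; set KA := kermx UA; set UB := B ^+ n; set KB := kermx UB.
have capA : (UA :&: KA)%MS = 0 := fit_cap A.
have capB : (UB :&: KB)%MS = 0 := fit_cap B.
set PA := proj_mx UA KA; set PB := proj_mx UB KB.
have UAX : (UA *m X <= UB)%MS by rewrite /UA /A powX submxMl.
have injA : forall m (W : 'M_(m,n)), (W <= UA)%MS -> W *m X = 0 -> W = 0.
  by move=> m W; apply: injX.
have rk : \rank KB = \rank KA.
  rewrite /KA /KB !mxrank_ker; congr (_ - _)%N.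
  by apply/eqP; rewrite eqn_leq !rank_le.
set rbA := row_base KA.
set rbB := castmx (rk, erefl n) (row_base KB).
have rbB_free : row_free rbB.
  by rewrite /row_free (eqmx_cast _ _) eq_row_base rk.
set T := pinvmx rbA *m rbB.
have TB : forall m (W : 'M_(m,n)), (W *m T <= KB)%MS.
  move=> m W; rewrite /T mulmxA (submx_trans (submxMl _ _)) //.
  by rewrite (eqmx_cast _ _) eq_row_base.
have Tinj : forall m (W : 'M_(m,n)), (W <= KA)%MS -> W *m T = 0 -> W = 0.
  move=> m W sW WT.
  have sW' : (W <= rbA)%MS by rewrite eq_row_base.
  rewrite -(mulmxKpV sW').
  move: WT; rewrite /T mulmxA => /eqP; rewrite mulmx_free_eq0 // => /eqP ->.
  by rewrite mul0mx.
clearbody T.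
have PAU : forall m (W : 'M_(m,n)), (W *m PA <= UA)%MS by move=> m W; apply: proj_mx_sub.
have PAK : forall m (W : 'M_(m,n)), (W - W *m PA <= KA)%MS.
  by move=> m W; apply: proj_mx_compl_sub; apply: fit_full.
have PAid : forall m (W : 'M_(m,n)), (W <= UA)%MS -> W *m PA = W.
  by move=> m W; apply: proj_mx_id.
have PBid : forall m (W : 'M_(m,n)), (W <= UB)%MS -> W *m PB = W.
  by move=> m W; apply: proj_mx_id.
have PB0 : forall m (W : 'M_(m,n)), (W <= KB)%MS -> W *m PB = 0.
  by move=> m W; apply: proj_mx_0.
clearbody PA PB.
have AU : (UA *m A <= UA)%MS by rewrite /UA -exprSrmx exprSmx submxMl.
exists (PA *m X + (1%:M - PA) *m T); split.
- rewrite -row_free_unit -kermx_eq0.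
  set K := kermx _.
  have Kh := mulmx_ker (PA *m X + (1%:M - PA) *m T).
  rewrite -/K mulmxDr !mulmxA in Kh.
  have u0 : K *m PA *m X = 0.
    apply/eqP; rewrite -submx0 -capB sub_capmx.
    rewrite (submx_trans (submxMr X (PAU _ K))) //=.
    move/eqP: Kh; rewrite addr_eq0 => /eqP ->.
    by rewrite (eqmx_opp _) TB.
  have w0 : K *m (1%:M - PA) *m T = 0.
    by move: Kh; rewrite u0 add0r.
  have KP : K *m PA = 0 by apply: injA.
  have KP' : K *m (1%:M - PA) = 0.
    apply: Tinj => //; by rewrite mulmxBr mulmx1 PAK.
  by move: KP'; rewrite mulmxBr mulmx1 KP subr0 => ->.
- have e1 : PA *m X *m PB = PA *m X.
    apply: PBid; rewrite -[PA]mul1mx (submx_trans (submxMr _ (PAU _ 1%:M))) //.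
  have e2 : (1%:M - PA) *m T *m PB = 0.
    by apply: PB0; rewrite TB.
  have e3 : PA *m A *m PA = PA *m A.
    apply: PAid.
    apply: submx_trans AU; apply: submxMr; by rewrite -(mul1mx PA) PAU.
  rewrite (mulmxDl (PA *m X)) !(mulmxA _ PB B) e1 e2 mul0mx addr0.
  rewrite (mulmxDr (PA *m A)) (mulmxA (PA *m A) PA X) e3 (mulmxA (PA *m A) _ T).
  rewrite mulmxBr mulmx1 e3 subrr mul0mx addr0.
  by rewrite /B /A !mulmxA.
Qed.
Lemma Ss_id (F : fieldType) n (hn : (0 < n)%N) (A : 'M[F]_n) :
  \rank (A *m A) = \rank A -> Ss A = A.
Proof.
move=> hr.
have e2 : \rank (A ^+ 1.+1) = \rank (A ^+ 1) by rewrite exprSmx expr1.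
have eU : (A ^+ n == A ^+ 1)%MS.
  by have := stab e2 (n - 1); rewrite subnKC.
have sK : (kermx A <= kermx (A ^+ n))%MS := ker_sub hn A.
have eK : (kermx A == kermx (A ^+ n))%MS.
  rewrite -(mxrank_leqif_eq sK) !mxrank_ker (eqmx_rank eU) expr1.
  by [].
rewrite /Ss.
have H := proj_mx_compl_sub (fit_full A 1%:M).
have H2 : (1%:M - 1%:M *m proj_mx (A ^+ n) (kermx (A ^+ n))) *m A = 0.
  apply/eqP; rewrite -sub_kermx (submx_trans H) //.
  by move/andP: eK => [].
move: H2; rewrite mul1mx mulmxBl mul1mx => /eqP; rewrite subr_eq0 => /eqP.
by move=> <-.
Qed.

Lemma reduce (F : fieldType) n (hn : (0 < n)%N) r :
  forall (A : 'M[F]_n), (\rank A <= r)%N ->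
  exists C, clos_refl_trans _ (@prim_conj F n) A C /\ Ss C = C.
Proof.
elim: r => [|r IH] A hA.
  exists A; split; first exact: rt_refl.
  apply: Ss_id => //; apply/eqP; rewrite eqn_leq mxrankM_maxl /=.
  by apply: leq_trans hA _.
have [e|ne] := eqVneq (\rank (A *m A)) (\rank A).
  by exists A; split; [exact: rt_refl | exact: Ss_id].
set P := proj_mx A (A^C)%MS.
have AP : A *m P = A by apply: proj_mx_id; [exact: capmx_compl | exact: submx_refl].
have PA : (P :=: A)%MS.
  apply/eqmxP; rewrite -(mul1mx P) proj_mx_sub /= mul1mx.
  by rewrite -{1}AP submxMl.
have rk : \rank (P *m A) = \rank (A *m A) by apply/eqmx_rank/eqmxP; apply: eqmxMr.
have lt : (\rank (P *m A) < \rank A)%N.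
  by rewrite rk ltn_neqAle ne mxrankM_maxl.
have [C [h1 h2]] := IH (P *m A) (leq_trans lt hA).
exists C; split => //.
apply: rt_trans h1; apply: rt_step; by exists A, P.
Qed.
Definition simS (F : fieldType) n (A B : 'M[F]_n) :=
  exists h, h \in unitmx /\ h *m Ss B = Ss A *m h.

Lemma simS_trans (F : fieldType) n (A B C : 'M[F]_n) :
  simS A B -> simS B C -> simS A C.
Proof.
move=> [h1 [u1 e1]] [h2 [u2 e2]]; exists (h1 *m h2); split.
  by rewrite unitmx_mul u1 u2.
by rewrite -mulmxA e2 mulmxA e1 mulmxA.
Qed.

Lemma prim_simS (F : fieldType) n (hn : (0 < n)%N) (A B : 'M[F]_n) :
  prim_conj A B -> simS A B.
Proof. by move=> [x [y [-> ->]]]; apply: main_dir. Qed.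

Lemma rt_simS (F : fieldType) n (hn : (0 < n)%N) (A B : 'M[F]_n) :
  clos_refl_trans _ (@prim_conj F n) A B -> simS A B.
Proof.
elim=> [x y /(prim_simS hn) //| x|x y z _ h1 _ h2].
  by exists 1%:M; rewrite unitmx1 mul1mx mulmx1.
exact: simS_trans h1 h2.
Qed.

Lemma prim_sym (F : fieldType) n (A B : 'M[F]_n) :
  prim_conj A B -> prim_conj B A.
Proof. by move=> [x [y [-> ->]]]; exists y, x. Qed.

Lemma rt_sym (F : fieldType) n (A B : 'M[F]_n) :
  clos_refl_trans _ (@prim_conj F n) A B -> clos_refl_trans _ (@prim_conj F n) B A.
Proof.
elim=> [x y /prim_sym h| x|x y z _ h1 _ h2].
- exact: rt_step.
- exact: rt_refl.
- exact: rt_trans h2 h1.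
Qed.

Lemma sim_prim (F : fieldType) n (P Q h : 'M[F]_n) :
  h \in unitmx -> h *m Q = P *m h -> prim_conj P Q.
Proof.
move=> u e; exists h, (Q *m invmx h); split.
  by rewrite mulmxA e mulmxK.
by rewrite -mulmxA mulVmx // mulmx1.
Qed.

Lemma t_rt (F : fieldType) n (A B C : 'M[F]_n) :
  clos_trans _ (@prim_conj F n) A B -> clos_refl_trans _ (@prim_conj F n) B C ->
  clos_trans _ (@prim_conj F n) A C.
Proof.
move=> h1 h2; move: h2 A h1.
elim=> [x y h A h1|x //|x y z _ IH1 _ IH2 A h1].
- exact: t_trans h1 (t_step _ _ _ _ h).
- by apply: IH2; apply: IH1.
Qed.

Theorem theorem1 (F : fieldType) (n : nat) (hn : (1 <= n)%N) (A B : 'M[F]_n) :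
  mx_conj A B <->
  exists g : 'M[F]_n, g \in unitmx /\ Ss B = g *m Ss A *m invmx g.
Proof.
split.
- move=> H.
  have [h [u e]] : simS A B.
    elim: H => [x y /(prim_simS hn) //|x y z _ h1 _ h2].
    exact: simS_trans h1 h2.
  exists (invmx h); split; first by rewrite unitmx_inv.
  by rewrite invmxK -mulmxA -e mulKmx.
- move=> [g [u e]].
  have [C [hC eC]] := reduce hn (rank_leq_col A).
  have [D [hD eD]] := reduce hn (rank_leq_col B).
  have [h1 [u1 e1]] := rt_simS hn hC.
  have [h2 [u2 e2]] := rt_simS hn hD.
  rewrite eC in e1; rewrite eD in e2.
  have p1 : prim_conj C (Ss A) := prim_sym (sim_prim u1 e1).
  have p2 : prim_conj (Ss A) (Ss B).
    exists (invmx g), (g *m Ss A); split; first by rewrite mulKmx.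
    by rewrite e mulmxA.
  have p3 : prim_conj (Ss B) D := sim_prim u2 e2.
  apply: clos_rt_t hC _.
  apply: t_rt (rt_sym hD).
  apply: t_trans (t_step _ _ _ _ p1) _.
  apply: t_trans (t_step _ _ _ _ p2) _.
  exact: t_step.
Qed.
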